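(* In the setting below, for any integer $t \ge 0$, if $\eta \geq \eta_0$ and an oscillation happens at some iteration $t_k > t$, then $\hat{w}_{t+1} \geq (1+\gamma^2/2)\hat{w}_t$.
   Context: Dimension $d=2$. Data $x_1,\dots,x_n\in\mathbb{R}^2$ with $\|x_i\|\le 1$, linearly separable (some $w$ has $\langle w,x_i\rangle>0$ for all $i$). $F(w) = \frac{1}{n}\sum_{i=1}^n \log(1+\exp(-\langle w, x_i\rangle))$. Maximum margin $\gamma = \max_{\|w\|=1}\min_i \langle w, x_i\rangle$ with maximizer the unit vector $w_*$; $v_*$ is a fixed unit vector orthogonal to $w_*$. Gradient descent: $w_0=0$, $w_{t+1} = w_t - \eta\nabla F(w_t)$ with constant $\eta>0$. $\hat{w}_t = \langle w_t, w_*\rangle$, $\tilde{w}_t = \langle w_t, v_*\rangle$. $\eta_0 = \max(n, \frac{32}{\gamma^2}\log\frac{256}{\gamma^2})$. $\lambda = \frac{1}{\gamma}\log\frac{1}{\exp(1/(8\eta))-1}$. An oscillation happens at iteration $t\ge 0$ if all of: (1) $\hat{w}_t \geq \lambda$; (2) $F(w_t) > 1/(8\eta)$ and $F(w_{t+1}) > 1/(8\eta)$; (3) $\tilde{w}_{t+1}\tilde{w}_t < 0$. *)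

(* Defs.v *)
From Stdlib Require Import Reals Lra.
From Coquelicot Require Import Coquelicot.
Open Scope R_scope.

Definition vec := (R * R)%type.
Definition dot (u v : vec) : R := fst u * fst v + snd u * snd v.
Definition vnorm (u : vec) : R := sqrt (dot u u).
Definition vadd (u v : vec) : vec := (fst u + fst v, snd u + snd v).
Definition vscale (a : R) (u : vec) : vec := (a * fst u, a * snd u).

Fixpoint sumR (f : nat -> R) (n : nat) : R :=
  match n with O => 0 | S k => sumR f k + f k end.

Definition F (n : nat) (x : nat -> vec) (w : vec) : R :=
  / INR n * sumR (fun i => ln (1 + exp (- dot w (x i)))) n.

Definition gradF (n : nat) (x : nat -> vec) (w : vec) : vec :=
  (Derive (fun a => F n x (a, snd w)) (fst w),
   Derive (fun b => F n x (fst w, b)) (snd w)).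

Fixpoint gd (n : nat) (x : nat -> vec) (eta : R) (t : nat) : vec :=
  match t with
  | O => (0, 0)
  | S k => let w := gd n x eta k in vadd w (vscale (- eta) (gradF n x w))
  end.

Definition is_max_margin (n : nat) (x : nat -> vec) (gamma : R) (wstar : vec) : Prop :=
  vnorm wstar = 1 /\
  (forall i, (i < n)%nat -> gamma <= dot wstar (x i)) /\
  (exists i, (i < n)%nat /\ dot wstar (x i) = gamma) /\
  (forall w, vnorm w = 1 -> exists i, (i < n)%nat /\ dot w (x i) <= gamma).

Definition eta0 (n : nat) (gamma : R) : R :=
  Rmax (INR n) (32 / gamma ^ 2 * ln (256 / gamma ^ 2)).

Definition lambda (gamma eta : R) : R :=
  / gamma * ln (/ (exp (/ (8 * eta)) - 1)).

Definition oscillation (n : nat) (x : nat -> vec) (eta gamma : R)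
    (wstar vstar : vec) (t : nat) : Prop :=
  dot (gd n x eta t) wstar >= lambda gamma eta /\
  F n x (gd n x eta t) > / (8 * eta) /\
  F n x (gd n x eta (S t)) > / (8 * eta) /\
  dot (gd n x eta (S t)) vstar * dot (gd n x eta t) vstar < 0.

(* Main.v *)
Require Import Defs.
From Stdlib Require Import Reals Lra Psatz.
From Coquelicot Require Import Coquelicot.
Open Scope R_scope.


Definition sg (z : R) : R := exp (- z) / (1 + exp (- z)).

Lemma deriv_term (c d a : R) :
  is_derive (fun y => ln (1 + exp (- (y * c + d)))) a (- c * sg (a * c + d)).
Proof.
  unfold sg. auto_derive.
  - pose proof (exp_pos (- (a * c + d))). lra.
  - field. pose proof (exp_pos (- (a * c + d))). lra.
Qed.

Lemma is_derive_sumR (f : nat -> R -> R) (df : nat -> R) k a :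
  (forall i, is_derive (f i) a (df i)) ->
  is_derive (fun y => sumR (fun i => f i y) k) a (sumR df k).
Proof.
  intros H. induction k as [|k IH]; simpl.
  - exact (is_derive_const (K:=R_AbsRing) 0 a).
  - exact (is_derive_plus (fun y => sumR (fun i => f i y) k) (f k) a _ _ IH (H k)).
Qed.

Lemma sumR_ext f g k : (forall i, (i < k)%nat -> f i = g i) -> sumR f k = sumR g k.
Proof.
  induction k as [|k IH]; intros H; simpl; auto.
  rewrite IH by (intros; apply H; lia). rewrite H by lia. reflexivity.
Qed.

Lemma sumR_le f g k : (forall i, (i < k)%nat -> f i <= g i) -> sumR f k <= sumR g k.
Proof.
  induction k as [|k IH]; intros H; simpl; [lra|].
  pose proof (IH (fun i Hi => H i ltac:(lia))). pose proof (H k ltac:(lia)). lra.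
Qed.

Lemma sumR_const c k : sumR (fun _ => c) k = INR k * c.
Proof.
  induction k as [|k IH]; simpl sumR; [simpl; ring|]. rewrite IH, S_INR. ring.
Qed.

Lemma sumR_lin f g c d k :
  sumR (fun i => c * f i + d * g i) k = c * sumR f k + d * sumR g k.
Proof. induction k as [|k IH]; simpl; [ring|]. rewrite IH. ring. Qed.

Lemma sumR_scal f c k : sumR (fun i => c * f i) k = c * sumR f k.
Proof. induction k as [|k IH]; simpl; [ring|]. rewrite IH. ring. Qed.

Lemma gradF_eq n x w :
  gradF n x w =
  (/ INR n * sumR (fun i => - fst (x i) * sg (dot w (x i))) n,
   / INR n * sumR (fun i => - snd (x i) * sg (dot w (x i))) n).
Proof.
  destruct w as [w1 w2]. unfold gradF, F. simpl fst; simpl snd. f_equal.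
  - apply is_derive_unique. apply is_derive_scal.
    apply (is_derive_sumR (fun i y => ln (1 + exp (- dot (y, w2) (x i))))
             (fun i => - fst (x i) * sg (dot (w1, w2) (x i)))).
    intros i. unfold dot; simpl.
    apply (deriv_term (fst (x i)) (w2 * snd (x i)) w1).
  - apply is_derive_unique. apply is_derive_scal.
    apply (is_derive_sumR (fun i y => ln (1 + exp (- dot (w1, y) (x i))))
             (fun i => - snd (x i) * sg (dot (w1, w2) (x i)))).
    intros i. unfold dot; simpl.
    eapply is_derive_ext.
    2: { pose proof (deriv_term (snd (x i)) (w1 * fst (x i)) w2) as D.
         replace (w1 * fst (x i) + w2 * snd (x i)) with (w2 * snd (x i) + w1 * fst (x i)) by ring.
         exact D. }
    intros y. simpl. f_equal. f_equal. f_equal. ring.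
Qed.

Lemma gd_dot n x eta k y :
  dot (gd n x eta (S k)) y =
  dot (gd n x eta k) y +
  eta / INR n * sumR (fun j => sg (dot (gd n x eta k) (x j)) * dot (x j) y) n.
Proof.
  simpl gd. set (w := gd n x eta k). rewrite gradF_eq.
  unfold vadd, vscale, dot. simpl.
  replace (sumR (fun j => sg (fst w * fst (x j) + snd w * snd (x j)) *
                         (fst (x j) * fst y + snd (x j) * snd y)) n)
    with (sumR (fun j => fst y * (fst (x j) * sg (fst w * fst (x j) + snd w * snd (x j)))
            + snd y * (snd (x j) * sg (fst w * fst (x j) + snd w * snd (x j)))) n)
    by (apply sumR_ext; intros; ring).
  rewrite sumR_lin.
  replace (sumR (fun i => - fst (x i) * sg (fst w * fst (x i) + snd w * snd (x i))) n)
    with (-1 * sumR (fun i => fst (x i) * sg (fst w * fst (x i) + snd w * snd (x i))) n)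
    by (rewrite <- sumR_scal; apply sumR_ext; intros; ring).
  replace (sumR (fun i => - snd (x i) * sg (fst w * fst (x i) + snd w * snd (x i))) n)
    with (-1 * sumR (fun i => snd (x i) * sg (fst w * fst (x i) + snd w * snd (x i))) n)
    by (rewrite <- sumR_scal; apply sumR_ext; intros; ring).
  unfold Rdiv. ring.
Qed.

Lemma exp_le x y : x <= y -> exp x <= exp y.
Proof. intros [H|H]; [left; apply exp_increasing; auto | subst; lra]. Qed.

Lemma sg_alt z : sg z = / (1 + exp z).
Proof.
  unfold sg. rewrite exp_Ropp. pose proof (exp_pos z). field. lra.
Qed.

Lemma sg_pos z : 0 < sg z.
Proof. rewrite sg_alt. pose proof (exp_pos z). apply Rinv_0_lt_compat. lra. Qed.

Lemma sg_le1 z : sg z <= 1.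
Proof.
  rewrite sg_alt. pose proof (exp_pos z).
  rewrite <- Rinv_1. apply Rinv_le_contravar; lra.
Qed.

Lemma sg_le_exp z : sg z <= exp (- z).
Proof.
  unfold sg. pose proof (exp_pos (- z)).
  assert (/ (1 + exp (- z)) <= 1) by (rewrite <- Rinv_1; apply Rinv_le_contravar; lra).
  unfold Rdiv. nra.
Qed.

Lemma sg_lip y z : y <= z -> sg y <= sg z + (z - y).
Proof.
  intros Hyz. rewrite !sg_alt.
  pose proof (exp_pos y). pose proof (exp_pos z).
  pose proof (exp_ineq1_le (y - z)) as E.
  assert (Eyz : exp (y - z) = exp y / exp z).
  { unfold Rminus. rewrite exp_plus, exp_Ropp. reflexivity. }
  rewrite Eyz in E.
  assert (exp y <= exp z) by (apply exp_le; lra).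
  (* 1/(1+ey) - 1/(1+ez) = (ez - ey)/((1+ey)(1+ez)) <= (ez-ey)/ez = 1 - ey/ez <= z - y *)
  assert (Hk1 : / (1 + exp y) - / (1 + exp z) <= 1 - exp y / exp z).
  { apply Rle_trans with ((exp z - exp y) / exp z).
    - replace (/ (1 + exp y) - / (1 + exp z)) with
        ((exp z - exp y) / ((1 + exp y) * (1 + exp z))) by (field; lra).
      unfold Rdiv. apply Rmult_le_compat_l; [lra|].
      apply Rinv_le_contravar; [lra|]. nra.
    - right. field. lra. }
  lra.
Qed.

Lemma ln1p_le z : ln (1 + exp (- z)) <= exp (- z).
Proof.
  pose proof (exp_pos (- z)).
  rewrite <- (ln_exp (exp (- z))) at 2.
  apply ln_le; [lra|]. apply exp_ineq1_le.
Qed.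

Lemma dot_comm u v : dot u v = dot v u.
Proof. unfold dot. ring. Qed.

Lemma vnorm_le1 u : vnorm u <= 1 -> dot u u <= 1.
Proof.
  unfold vnorm. intros H.
  assert (0 <= dot u u) by (unfold dot; nra).
  rewrite <- (sqrt_sqrt (dot u u)) by auto.
  pose proof (sqrt_pos (dot u u)). nra.
Qed.

Lemma vnorm_eq1 u : vnorm u = 1 -> dot u u = 1.
Proof.
  unfold vnorm. intros H.
  assert (0 <= dot u u) by (unfold dot; nra).
  rewrite <- (sqrt_sqrt (dot u u)) by auto. rewrite H. ring.
Qed.

Lemma cs_le1 u v : dot u u <= 1 -> dot v v <= 1 -> Rabs (dot u v) <= 1.
Proof.
  unfold dot. destruct u as [a b]; destruct v as [c d]; simpl. intros H1 H2.
  assert (Hsq : (a * c + b * d) ^ 2 <= 1).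
  { assert (0 <= (a*d-b*c)^2) by (apply pow2_ge_0).
    assert ((a*c+b*d)^2 <= (a*a+b*b)*(c*c+d*d)) by nra.
    assert (0 <= a*a+b*b) by nra. assert (0 <= c*c+d*d) by nra.
    assert ((a*a+b*b)*(c*c+d*d) <= 1 * 1) by (apply Rmult_le_compat; lra). lra. }
  apply Rabs_le. split; nra.
Qed.

Lemma decomp (ws vs w y : vec) :
  dot ws ws = 1 -> dot vs vs = 1 -> dot vs ws = 0 ->
  dot w y = dot w ws * dot y ws + dot w vs * dot y vs.
Proof.
  destruct ws as [p q]; destruct vs as [r s]; destruct w as [w1 w2]; destruct y as [y1 y2].
  unfold dot; simpl. intros H1 H2 H3.
  set (k := s * p - r * q).
  assert (E1 : r * (p * p + q * q) = r) by (rewrite H1; ring).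
  assert (E2 : s * (p * p + q * q) = s) by (rewrite H1; ring).
  assert (E3 : p * (r * p + s * q) = 0) by (rewrite H3; ring).
  assert (E4 : q * (r * p + s * q) = 0) by (rewrite H3; ring).
  assert (Hr : r = - k * q) by (unfold k; nra).
  assert (Hs : s = k * p) by (unfold k; nra).
  assert (Hk : k * k = 1).
  { assert (k * k * (p * p + q * q) = 1) by (rewrite <- H2, Hr, Hs; ring).
    rewrite H1 in H. lra. }
  rewrite Hr, Hs.
  transitivity (w1 * y1 * (p * p + (k * k) * (q * q)) + w2 * y2 * (q * q + (k * k) * (p * p))
     + (w1 * y2 + w2 * y1) * (p * q - (k * k) * (p * q))); [|ring].
  rewrite Hk. replace (p * p + 1 * (q * q)) with 1 by lra.
  replace (q * q + 1 * (p * p)) with 1 by lra. ring.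
Qed.

Lemma numerics g eta :
  0 < g -> g <= 1 -> eta >= 32 / g ^ 2 * ln (256 / g ^ 2) ->
  8 * eta <= exp (g ^ 2 * eta / 4) /\ 9 <= g ^ 5 * exp (g ^ 2 * eta / 4).
Proof.
  intros Hg Hg1 He.
  set (u := 256 / g ^ 2).
  assert (Hg2 : 0 < g ^ 2) by (apply pow_lt; auto).
  assert (Hg21 : g ^ 2 <= 1) by (replace 1 with (1 ^ 2) by ring; apply pow_incr; lra).
  assert (Hu : 256 <= u).
  { unfold u. apply (Rmult_le_reg_r (g ^ 2)); auto. unfold Rdiv.
    rewrite Rmult_assoc, Rinv_l by lra. nra. }
  set (L := ln u).
  assert (HL : exp L = u) by (apply exp_ln; lra).
  assert (HL0 : 0 <= L).
  { unfold L. rewrite <- ln_1. apply ln_le; lra. }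
  set (c := g ^ 2 * eta / 4).
  assert (Hc : 8 * L <= c).
  { unfold c. fold u L in He.
    assert (eta * g ^ 2 >= 32 / g ^ 2 * L * g ^ 2) by (apply Rmult_ge_compat_r; lra).
    replace (32 / g ^ 2 * L * g ^ 2) with (32 * L) in H by (field; lra). lra. }
  assert (Hc2 : exp c = exp (c / 2) * exp (c / 2)) by (rewrite <- exp_plus; f_equal; lra).
  assert (H4 : exp (4 * L) = u * u * u * u).
  { replace (4 * L) with (L + L + L + L) by ring. rewrite !exp_plus, HL. ring. }
  assert (Hh : u * u * u * u <= exp (c / 2)) by (rewrite <- H4; apply exp_le; lra).
  assert (Hh2 : 1 + c / 2 <= exp (c / 2)) by apply exp_ineq1_le.
  assert (Hu4 : u <= u * u * u * u).
  { assert (u <= u * u) by nra. assert (u * u <= u * u * u) by nra.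
    assert (u * u * u <= u * u * u * u) by nra. lra. }
  assert (Heta : eta = 4 * c / g ^ 2) by (unfold c; field; lra).
  split.
  - fold c. rewrite Hc2, Heta.
    assert (64 / g ^ 2 <= u) by (unfold u; unfold Rdiv; apply Rmult_le_compat_r;
       [left; apply Rinv_0_lt_compat; auto | lra]).
    assert (0 <= c) by lra.
    assert (8 * (4 * c / g ^ 2) = (c / 2) * (64 / g ^ 2)) by (field; lra).
    assert (0 <= 64 / g ^ 2) by (unfold Rdiv; apply Rmult_le_pos; [lra| left; apply Rinv_0_lt_compat; auto]).
    nra.
  - fold c.
    assert (exp (c / 2) <= exp c) by (apply exp_le; lra).
    assert (Hg5 : g ^ 5 * (u * u * u * u) = 256 * 256 * 256 * 256 / (g ^ 3)).
    { unfold u. field. lra. }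
    assert (256 * 256 * 256 * 256 <= 256 * 256 * 256 * 256 / g ^ 3).
    { assert (0 < g ^ 3) by (apply pow_lt; auto).
      assert (g ^ 3 <= 1) by (replace 1 with (1 ^ 3) by ring; apply pow_incr; lra).
      apply (Rmult_le_reg_r (g ^ 3)); auto.
      replace (256 * 256 * 256 * 256 / g ^ 3 * g ^ 3) with (256 * 256 * 256 * 256) by (field; lra).
      nra. }
    assert (0 < g ^ 5) by (apply pow_lt; auto).
    nra.
Qed.

Lemma sg_anti y z : y <= z -> sg z <= sg y.
Proof.
  intros H. rewrite !sg_alt. pose proof (exp_pos y). pose proof (exp_pos z).
  apply Rinv_le_contravar; [lra|]. pose proof (exp_le y z H). lra.
Qed.

Lemma sum_abs_le f g k : (forall i, (i < k)%nat -> Rabs (f i) <= g i) ->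
  - sumR g k <= sumR f k <= sumR g k.
Proof.
  induction k as [|k IH]; intros H; simpl; [lra|].
  pose proof (IH (fun i Hi => H i ltac:(lia))). pose proof (H k ltac:(lia)) as Hk.
  apply Rabs_le_between in Hk. lra.
Qed.

Definition Setup n (x : nat -> vec) eta gamma ws vs :=
  (0 < n)%nat /\ 0 < gamma /\ gamma <= 1 /\ 0 < eta /\ INR n <= eta /\
  8 * eta <= exp (gamma ^ 2 * eta / 4) /\ 9 <= gamma ^ 5 * exp (gamma ^ 2 * eta / 4) /\
  dot ws ws = 1 /\ dot vs vs = 1 /\ dot vs ws = 0 /\
  (forall i, (i < n)%nat -> gamma <= dot (x i) ws <= 1) /\
  (forall i, (i < n)%nat -> Rabs (dot (x i) vs) <= 1) /\
  (forall i j, (i < n)%nat -> (j < n)%nat -> Rabs (dot (x i) (x j)) <= 1).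

Definition Sy n x (W y : vec) := sumR (fun j => sg (dot W (x j)) * dot (x j) y) n.
Definition S0 n x (W : vec) := sumR (fun j => sg (dot W (x j))) n.

Lemma S0_bounds n x eta gamma ws vs W :
  Setup n x eta gamma ws vs ->
  gamma * S0 n x W <= Sy n x W ws /\
  (forall y, (forall j, (j < n)%nat -> Rabs (dot (x j) y) <= 1) ->
     - S0 n x W <= Sy n x W y <= S0 n x W).
Proof.
  intros (Hn & Hg & Hg1 & He & HeN & Hc1 & Hc2 & Hws & Hvs & Hwv & Hal & Hbe & Hxx).
  split.
  - unfold S0, Sy. rewrite <- sumR_scal. apply sumR_le. intros i Hi.
    pose proof (sg_pos (dot W (x i))). pose proof (Hal i Hi). nra.
  - intros y Hy. unfold S0, Sy. apply sum_abs_le. intros i Hi.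
    rewrite Rabs_mult. pose proof (sg_pos (dot W (x i))).
    rewrite (Rabs_pos_eq (sg _)) by lra. pose proof (Hy i Hi).
    pose proof (Rabs_pos (dot (x i) y)). nra.
Qed.

Lemma INRn_pos n : (0 < n)%nat -> 0 < INR n.
Proof. intros. apply lt_0_INR. auto. Qed.

Lemma nosc n x eta gamma ws vs W :
  Setup n x eta gamma ws vs ->
  let a := dot W ws in let h := eta / INR n in
  a >= gamma * eta / 2 ->
  h * Sy n x W ws < gamma ^ 2 * a / 2 ->
  F n x W > / (8 * eta) ->
  (dot W vs + h * Sy n x W vs) * dot W vs < 0 -> False.
Proof.
  intros HS a h Ha HP HF Hflip.
  pose proof HS as (Hn & Hg & Hg1 & He & HeN & Hc1 & Hc2 & Hws & Hvs & Hwv & Hal & Hbe & Hxx).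
  destruct (S0_bounds n x eta gamma ws vs W HS) as [B1 B2].
  pose proof (B2 vs Hbe) as B3.
  assert (Hn' : 0 < INR n) by (apply INRn_pos; auto).
  assert (Hh : 0 < h) by (unfold h; unfold Rdiv; apply Rmult_lt_0_compat; auto; apply Rinv_0_lt_compat; auto).
  assert (Ha0 : 0 < a) by nra.
  assert (HhS : h * S0 n x W < gamma * a / 2).
  { assert (gamma * (h * S0 n x W) < gamma * (gamma * a / 2)) by nra. nra. }
  set (b := dot W vs) in *.
  set (d := h * Sy n x W vs) in *.
  assert (Hd : - (h * S0 n x W) <= d <= h * S0 n x W) by (unfold d; split; nra).
  assert (Hb : - (gamma * a / 2) < b < gamma * a / 2).
  { destruct (Rle_or_lt 0 b); split; nra. }
  set (c := gamma ^ 2 * eta / 4) in *.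
  assert (Hm : forall i, (i < n)%nat -> c <= dot W (x i)).
  { intros i Hi. rewrite (decomp ws vs W (x i) Hws Hvs Hwv). fold a b.
    pose proof (Hal i Hi). pose proof (Hbe i Hi) as Hb1. apply Rabs_le_between in Hb1.
    assert (gamma * a <= a * dot (x i) ws) by nra.
    assert (- (gamma * a / 2) <= b * dot (x i) vs) by (destruct (Rle_or_lt 0 b); nra).
    unfold c. nra. }
  assert (HFle : F n x W <= exp (- c)).
  { unfold F. apply Rle_trans with (/ INR n * sumR (fun _ => exp (- c)) n).
    - apply Rmult_le_compat_l; [left; apply Rinv_0_lt_compat; auto|].
      apply sumR_le. intros i Hi. eapply Rle_trans; [apply ln1p_le|].
      apply exp_le. pose proof (Hm i Hi). lra.
    - rewrite sumR_const. right. field. lra. }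
  rewrite exp_Ropp in HFle.
  assert (/ exp c <= / (8 * eta)).
  { apply Rinv_le_contravar; [lra|]. unfold c. exact Hc1. }
  lra.
Qed.

Lemma step n x eta gamma ws vs W W' :
  Setup n x eta gamma ws vs ->
  (forall y, dot W' y = dot W y + eta / INR n * Sy n x W y) ->
  let a := dot W ws in let h := eta / INR n in
  a >= gamma * eta / 2 ->
  h * Sy n x W ws < gamma ^ 2 * a / 2 ->
  h * Sy n x W' ws < gamma ^ 2 * (a + h * Sy n x W ws) / 2.
Proof.
  intros HS HW' a h Ha HP.
  pose proof HS as (Hn & Hg & Hg1 & He & HeN & Hc1 & Hc2 & Hws & Hvs & Hwv & Hal & Hbe & Hxx).
  destruct (S0_bounds n x eta gamma ws vs W HS) as [B1 B2].
  assert (Hn' : 0 < INR n) by (apply INRn_pos; auto).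
  assert (Hh : 0 < h) by (unfold h; unfold Rdiv; apply Rmult_lt_0_compat; auto; apply Rinv_0_lt_compat; auto).
  assert (Hhn : h * INR n = eta) by (unfold h; field; lra).
  assert (Ha0 : 0 < a) by nra.
  assert (HhS : h * S0 n x W < gamma * a / 2).
  { assert (gamma * (h * S0 n x W) < gamma * (gamma * a / 2)) by nra. nra. }
  set (b := dot W vs) in *.
  set (c := gamma ^ 2 * eta / 4) in *.
  set (e := exp (- c)).
  assert (He0 : 0 < e) by apply exp_pos.
  assert (Hce : exp c * e = 1) by (unfold e; rewrite exp_Ropp; field; pose proof (exp_pos c); lra).
  assert (He2 : exp (- (2 * c)) = e * e) by (unfold e; rewrite <- exp_plus; f_equal; ring).
  set (E := eta * (e * e) + e).
  assert (HE0 : 0 <= E) by (unfold E; nra).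
  assert (Hmi : forall i, (i < n)%nat ->
            dot W (x i) = a * dot (x i) ws + b * dot (x i) vs).
  { intros i Hi. rewrite (decomp ws vs W (x i) Hws Hvs Hwv). fold a b. ring. }
  assert (Hpt : forall i, (i < n)%nat -> sg (dot W' (x i)) <= sg (dot W (x i)) + E).
  { intros i Hi. rewrite HW'. fold h.
    set (mi := dot W (x i)).
    assert (Hxi : forall j, (j < n)%nat -> Rabs (dot (x j) (x i)) <= 1) by (intros; apply Hxx; auto).
    pose proof (B2 (x i) Hxi) as B3.
    destruct (Rle_or_lt (gamma * a) mi) as [Hbig | Hsmall].
    - eapply Rle_trans; [apply sg_le_exp|].
      assert (exp (- (mi + h * Sy n x W (x i))) <= e).
      { unfold e. apply exp_le. unfold c. nra. }
      pose proof (sg_pos mi). unfold E. nra.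
    - assert (Hsum : - (INR n * (e * e)) <= Sy n x W (x i)).
      { apply Rle_trans with (sumR (fun _ => - (e * e)) n).
        { rewrite sumR_const. right. ring. }
        unfold Sy.
        apply sumR_le. intros j Hj.
        pose proof (sg_pos (dot W (x j))) as Hsgj.
        destruct (Rle_or_lt (gamma * a) (dot W (x j))) as [Hjbig | Hjsmall].
        + assert (sg (dot W (x j)) <= e * e).
          { eapply Rle_trans; [apply sg_le_exp|]. rewrite <- He2. apply exp_le. unfold c. nra. }
          pose proof (Hxx j i Hj Hi) as Hd. apply Rabs_le_between in Hd. nra.
        + assert (0 <= dot (x j) (x i)).
          { rewrite (decomp ws vs (x j) (x i) Hws Hvs Hwv).
            pose proof (Hal i Hi). pose proof (Hal j Hj).
            rewrite Hmi in Hjsmall by auto. unfold mi in Hsmall. rewrite Hmi in Hsmall by auto.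
            assert (b * dot (x i) vs < 0) by nra.
            assert (b * dot (x j) vs < 0) by nra.
            assert (0 < (b * dot (x i) vs) * (b * dot (x j) vs)) by nra.
            assert (0 < dot (x j) vs * dot (x i) vs) by nra.
            nra. }
          nra. }
      assert (Hlow : mi - eta * (e * e) <= mi + h * Sy n x W (x i)).
      { assert (h * Sy n x W (x i) >= h * (- (INR n * (e * e)))) by (apply Rmult_ge_compat_l; lra).
        replace (h * - (INR n * (e * e))) with (- (h * INR n) * (e * e)) in H by ring.
        rewrite Hhn in H. lra. }
      destruct (Rle_or_lt (mi + h * Sy n x W (x i)) mi) as [Hle | Hgt].
      + pose proof (sg_lip _ _ Hle). unfold E. lra.
      + pose proof (sg_anti mi _ (Rlt_le _ _ Hgt)). lra. }
  assert (HSum : Sy n x W' ws <= Sy n x W ws + INR n * E).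
  { rewrite <- sumR_const. unfold Sy.
    replace (sumR (fun j => sg (dot W (x j)) * dot (x j) ws) n + sumR (fun _ => E) n)
      with (sumR (fun j => sg (dot W (x j)) * dot (x j) ws + E) n)
      by (clear; induction n; simpl; [ring| rewrite IHn; ring]).
    apply sumR_le. intros i Hi. pose proof (Hpt i Hi). pose proof (Hal i Hi).
    pose proof (sg_pos (dot W' (x i))). nra. }
  assert (HhSum : h * Sy n x W' ws <= h * Sy n x W ws + eta * E).
  { rewrite <- Hhn. nra. }
  assert (H8 : 8 * eta * e <= 1).
  { assert (8 * eta * e <= exp c * e) by (apply Rmult_le_compat_r; lra). lra. }
  assert (H9 : 9 * e <= gamma ^ 5).
  { assert (9 * e <= gamma ^ 5 * exp c * e) by (apply Rmult_le_compat_r; lra).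
    replace (gamma ^ 5 * exp c * e) with (gamma ^ 5 * (exp c * e)) in H by ring.
    rewrite Hce in H. lra. }
  assert (HEb : eta * E <= gamma ^ 4 * a / 4).
  { unfold E.
    assert (eta * e * (eta * e) <= eta * e / 8).
    { assert (0 < eta * e) by nra. apply Rle_trans with (eta * e * (1/8)); [apply Rmult_le_compat_l; lra | lra]. }
    assert (eta * e * 9 <= eta * gamma ^ 5) by nra.
    assert (gamma ^ 5 * eta <= 2 * gamma ^ 4 * a).
    { assert (0 < gamma ^ 4) by (apply pow_lt; auto).
      replace (gamma ^ 5) with (gamma ^ 4 * gamma) by ring. nra. }
    nra. }
  assert (0 < 1 - gamma ^ 2 / 2).
  { assert (gamma ^ 2 <= 1) by (replace 1 with (1 ^ 2) by ring; apply pow_incr; lra). lra. }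
  set (D := h * Sy n x W ws) in *.
  assert (D * (1 - gamma ^ 2 / 2) < gamma ^ 2 * a / 2 * (1 - gamma ^ 2 / 2)) by nra.
  nra.
Qed.

Theorem lemma8 (n : nat) (x : nat -> vec) (gamma eta : R) (wstar vstar : vec)
  (Hn : (0 < n)%nat)
  (Hx : forall i, (i < n)%nat -> vnorm (x i) <= 1)
  (Hsep : exists w : vec, forall i, (i < n)%nat -> dot w (x i) > 0)
  (Hmm : is_max_margin n x gamma wstar)
  (Hv : vnorm vstar = 1 /\ dot vstar wstar = 0)
  (Heta : eta > 0)
  (t : nat) :
  eta >= eta0 n gamma ->
  (exists tk : nat, (t < tk)%nat /\ oscillation n x eta gamma wstar vstar tk) ->
  dot (gd n x eta (S t)) wstar >= (1 + gamma ^ 2 / 2) * dot (gd n x eta t) wstar.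
Proof.
  intros Heta0 [tk [Htk Hosc]].
  destruct Hmm as [Hws [Hge [[i0 [Hi0 Hi0eq]] Hmax]]].
  destruct Hv as [Hvs Hwv].
  apply vnorm_eq1 in Hws. apply vnorm_eq1 in Hvs.
  assert (Hxx1 : forall i, (i < n)%nat -> dot (x i) (x i) <= 1) by (intros; apply vnorm_le1; auto).
  assert (Hg1 : gamma <= 1).
  { rewrite <- Hi0eq. pose proof (cs_le1 wstar (x i0) ltac:(lra) (Hxx1 i0 Hi0)) as H.
    apply Rabs_le_between in H. lra. }
  assert (Hg : 0 < gamma).
  { destruct Hsep as [w0 Hw0].
    pose proof (Hw0 O Hn) as H0.
    assert (Hd : 0 < dot w0 w0).
    { destruct w0 as [p q]. unfold dot in *; simpl in *.
      destruct (Req_dec p 0); destruct (Req_dec q 0); try nra. }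
    set (N := vnorm w0).
    assert (HN : N * N = dot w0 w0) by (unfold N, vnorm; apply sqrt_sqrt; lra).
    assert (HN0 : 0 < N) by (unfold N, vnorm; apply sqrt_lt_R0; auto).
    set (u := vscale (/ N) w0).
    assert (Hu : vnorm u = 1).
    { unfold vnorm. replace (dot u u) with 1. apply sqrt_1.
      replace (dot u u) with (/ N * / N * dot w0 w0) by (unfold u, vscale, dot; simpl; ring).
      rewrite <- HN. field. lra. }
    destruct (Hmax u Hu) as [i [Hi Hle]].
    assert (dot u (x i) = / N * dot w0 (x i)) by (unfold u, vscale, dot; simpl; ring).
    pose proof (Hw0 i Hi). assert (0 < / N) by (apply Rinv_0_lt_compat; auto). nra. }
  assert (HeN : INR n <= eta).
  { unfold eta0 in Heta0. pose proof (Rmax_l (INR n) (32 / gamma ^ 2 * ln (256 / gamma ^ 2))). lra. }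
  assert (HeL : eta >= 32 / gamma ^ 2 * ln (256 / gamma ^ 2)).
  { unfold eta0 in Heta0. pose proof (Rmax_r (INR n) (32 / gamma ^ 2 * ln (256 / gamma ^ 2))). lra. }
  destruct (numerics gamma eta Hg Hg1 HeL) as [Hc1 Hc2].
  assert (Hal : forall k, (k < n)%nat -> gamma <= dot (x k) wstar <= 1).
  { intros k Hk. split. rewrite dot_comm. apply Hge; auto.
    pose proof (cs_le1 (x k) wstar (Hxx1 k Hk) ltac:(lra)) as H. apply Rabs_le_between in H. lra. }
  assert (Hbe : forall k, (k < n)%nat -> Rabs (dot (x k) vstar) <= 1).
  { intros k Hk. apply cs_le1; auto; lra. }
  assert (Hxx : forall k j, (k < n)%nat -> (j < n)%nat -> Rabs (dot (x k) (x j)) <= 1).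
  { intros k j Hk Hj. apply cs_le1; auto. }
  assert (HS : Setup n x eta gamma wstar vstar).
  { exact (conj Hn (conj Hg (conj Hg1 (conj Heta (conj HeN (conj Hc1 (conj Hc2
      (conj Hws (conj Hvs (conj Hwv (conj Hal (conj Hbe Hxx)))))))))))). }
  set (w := gd n x eta).
  set (h := eta / INR n).
  assert (Hn' : 0 < INR n) by (apply INRn_pos; auto).
  assert (Hh : 0 < h) by (unfold h; unfold Rdiv; apply Rmult_lt_0_compat; auto; apply Rinv_0_lt_compat; auto).
  assert (Hstep : forall s y, dot (w (S s)) y = dot (w s) y + h * Sy n x (w s) y).
  { intros s y. unfold w, h, Sy. apply gd_dot. }
  set (a := fun s => dot (w s) wstar).
  assert (Hmono : forall s, a s <= a (S s)).
  { intros s. unfold a. rewrite Hstep.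
    destruct (S0_bounds n x eta gamma wstar vstar (w s) HS) as [B1 _].
    assert (0 <= S0 n x (w s)).
    { unfold S0. rewrite <- (Rmult_0_r (INR n)), <- sumR_const. apply sumR_le.
      intros; left; apply sg_pos. }
    assert (0 <= Sy n x (w s) wstar) by nra.
    assert (0 <= h * Sy n x (w s) wstar) by (apply Rmult_le_pos; lra).
    lra. }
  assert (Ha0 : a O = 0) by (unfold a, w; simpl; unfold dot; simpl; ring).
  assert (Ha1 : a 1%nat >= gamma * eta / 2).
  { unfold a. rewrite Hstep. fold (a O). rewrite Ha0.
    assert (Hw0 : w O = (0, 0)) by reflexivity.
    assert (Hsg0 : sg 0 = / 2) by (unfold sg; rewrite Ropp_0, exp_0; field).
    assert (HSy : INR n * (gamma / 2) <= Sy n x (w O) wstar).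
    { rewrite <- sumR_const. unfold Sy. apply sumR_le. intros i Hi.
      rewrite Hw0. replace (dot (0, 0) (x i)) with 0 by (unfold dot; simpl; ring).
      rewrite Hsg0. pose proof (Hge i Hi). rewrite dot_comm. lra. }
    assert (h * (INR n * (gamma / 2)) = gamma * eta / 2) by (unfold h; field; lra).
    assert (h * (INR n * (gamma / 2)) <= h * Sy n x (w O) wstar) by (apply Rmult_le_compat_l; lra).
    lra. }
  assert (Hbig : forall s, (1 <= s)%nat -> a s >= gamma * eta / 2).
  { intros s Hs. induction s as [|s IH]; [lia|].
    destruct s as [|s]; [exact Ha1|].
    pose proof (IH ltac:(lia)). pose proof (Hmono (S s)). lra. }
  destruct (Rlt_or_le (a (S t)) ((1 + gamma ^ 2 / 2) * a t)) as [HP | HP]; [exfalso | apply Rle_ge; exact HP].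
  assert (Ht1 : (1 <= t)%nat).
  { destruct t; [|lia]. exfalso. rewrite Ha0 in HP. pose proof (Hmono O). rewrite Ha0 in H. lra. }
  assert (HPeq : forall s, a (S s) < (1 + gamma ^ 2 / 2) * a s <->
                  h * Sy n x (w s) wstar < gamma ^ 2 * a s / 2).
  { intros s. unfold a at 1. rewrite Hstep. fold (a s). split; intros; lra. }
  assert (Hall : forall d, a (S (t + d))%nat < (1 + gamma ^ 2 / 2) * a (t + d)%nat).
  { induction d as [|d IH].
    - rewrite Nat.add_0_r. exact HP.
    - apply HPeq in IH. apply HPeq.
      replace (t + S d)%nat with (S (t + d)) by lia.
      pose proof (step n x eta gamma wstar vstar (w (t + d)%nat) (w (S (t + d)%nat)) HS
                   (Hstep (t + d)%nat) (Hbig (t + d)%nat ltac:(lia)) IH) as Hs.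
      fold h in Hs. replace (a (S (t + d))) with (dot (w (t + d)%nat) wstar + h * Sy n x (w (t + d)%nat) wstar) by (unfold a; rewrite Hstep; reflexivity). exact Hs. }
  destruct Hosc as [_ [HF [_ Hflip]]].
  pose proof (Hall (tk - t)%nat) as Htk'.
  replace (t + (tk - t))%nat with tk in Htk' by lia.
  apply HPeq in Htk'.
  apply (nosc n x eta gamma wstar vstar (w tk) HS (Hbig tk ltac:(lia)) Htk' HF).
  fold h. rewrite <- Hstep. exact Hflip.
Qed.
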